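(* Let $c=\min_{x\in\partial D}\phi(x;p,p')$, assume $0<\eta'<\inf_{\omega\in S^2}s(\omega;p,p',c)$, and fix $0<s<\eta'$. For $\omega\in S^2$: (i) if $p'+s(\omega;p,p',c)\omega\in\partial D$, then $\min_{x\in\partial D}\phi(x;p,p'+s\omega)=c-s$; (ii) if $p'+s(\omega;p,p',c)\omega\notin\partial D$, then $\min_{x\in\partial D}\phi(x;p,p'+s\omega)>c-s$. Consequently $$\Lambda_{\partial D}(p,p')=\{p'+s(\omega;p,p',c)\omega:\ \omega\in S^2,\ \min_{x\in\partial D}\phi(x;p,p'+s\omega)=c-s\}.$$
   Context: Let $D\subset\mathbb R^3$ be a nonempty bounded open set with $C^2$ boundary; $p,p'\in\mathbb R^3\setminus\overline D$ with $[p,p']\cap\overline D=\emptyset$ (so $c>|p-p'|$); $B'$ is the open ball with center $p'$ and radius $\eta'$, $\overline{B'}\cap\overline D=\emptyset$. $\phi(x;y,y')=|y-x|+|x-y'|$; $E_c(p,p')=\{x:\phi(x;p,p')=c\}$; $\Lambda_{\partial D}(p,p')=\{q\in\partial D:\phi(q;p,p')=c\}$. For $\omega\in S^2$, $s(\omega;p,p',c)=\dfrac{c^2-|p-p'|^2}{2\{c-\omega\cdot(p-p')\}}$, so that $p'+s(\omega;p,p',c)\omega$ is the unique point of $E_c(p,p')$ on the ray $\{p'+t\omega:t>0\}$. *)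

(* Defs.v *)
From Stdlib Require Import Reals Lra.
Open Scope R_scope.

Record V3 := mkV3 { v1 : R; v2 : R; v3 : R }.

Definition vadd (x y : V3) : V3 := mkV3 (v1 x + v1 y) (v2 x + v2 y) (v3 x + v3 y).
Definition vsub (x y : V3) : V3 := mkV3 (v1 x - v1 y) (v2 x - v2 y) (v3 x - v3 y).
Definition vscale (a : R) (x : V3) : V3 := mkV3 (a * v1 x) (a * v2 x) (a * v3 x).
Definition dot (x y : V3) : R := v1 x * v1 y + v2 x * v2 y + v3 x * v3 y.
Definition norm (x : V3) : R := sqrt (dot x x).
Definition dist3 (x y : V3) : R := norm (vsub x y).
Definition vzero : V3 := mkV3 0 0 0.

Definition in_S2 (w : V3) : Prop := norm w = 1.

Definition is_open (D : V3 -> Prop) : Prop :=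
  forall x, D x -> exists r, 0 < r /\ forall y, dist3 y x < r -> D y.
Definition is_bounded (D : V3 -> Prop) : Prop :=
  exists M, forall x, D x -> norm x <= M.
Definition closure (D : V3 -> Prop) (x : V3) : Prop :=
  forall eps, 0 < eps -> exists y, D y /\ dist3 y x < eps.
Definition interior (D : V3 -> Prop) (x : V3) : Prop :=
  exists r, 0 < r /\ forall y, dist3 y x < r -> D y.
Definition boundary (D : V3 -> Prop) (x : V3) : Prop :=
  closure D x /\ ~ interior D x.

Definition basis (i : nat) : V3 :=
  match i with 0%nat => mkV3 1 0 0 | 1%nat => mkV3 0 1 0 | _ => mkV3 0 0 1 end.
Definition is_partial (f : V3 -> R) (i : nat) (g : V3 -> R) : Prop :=
  forall x, derivable_pt_lim (fun t => f (vadd x (vscale t (basis i)))) 0 (g x).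
Definition continuous3 (f : V3 -> R) : Prop :=
  forall x eps, 0 < eps -> exists delta, 0 < delta /\
    forall y, dist3 y x < delta -> Rabs (f y - f x) < eps.
Definition C1 (f : V3 -> R) : Prop :=
  continuous3 f /\
  exists g1 g2 g3, is_partial f 0 g1 /\ is_partial f 1 g2 /\ is_partial f 2 g3 /\
    continuous3 g1 /\ continuous3 g2 /\ continuous3 g3.
Definition C2 (f : V3 -> R) : Prop :=
  continuous3 f /\
  exists g1 g2 g3, is_partial f 0 g1 /\ is_partial f 1 g2 /\ is_partial f 2 g3 /\
    C1 g1 /\ C1 g2 /\ C1 g3.

Definition C2_boundary (D : V3 -> Prop) : Prop :=
  forall q, boundary D q ->
    exists r rho g1 g2 g3, 0 < r /\ C2 rho /\
      is_partial rho 0 g1 /\ is_partial rho 1 g2 /\ is_partial rho 2 g3 /\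
      mkV3 (g1 q) (g2 q) (g3 q) <> vzero /\
      forall x, dist3 x q < r -> (D x <-> rho x < 0).

Definition phi (x y y' : V3) : R := norm (vsub y x) + norm (vsub x y').

Definition sfun (w p p' : V3) (c : R) : R :=
  (c ^ 2 - (norm (vsub p p')) ^ 2) / (2 * (c - dot w (vsub p p'))).

Definition is_min_on (S : V3 -> Prop) (f : V3 -> R) (m : R) : Prop :=
  (exists x, S x /\ f x = m) /\ (forall x, S x -> m <= f x).

Definition is_inf_on (S : V3 -> Prop) (f : V3 -> R) (m : R) : Prop :=
  (forall x, S x -> m <= f x) /\
  (forall m', (forall x, S x -> m' <= f x) -> m' <= m).

Definition Lambda (D : V3 -> Prop) (p p' : V3) (c : R) (q : V3) : Prop :=
  boundary D q /\ phi q p p' = c.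

(* Main.v *)
Require Import Defs.
From Stdlib Require Import Reals Lra Psatz Classical ClassicalEpsilon.
From Stdlib Require Import List.
From Coquelicot Require Compactness.
Open Scope R_scope.

Lemma V3eq (x y : V3) : v1 x = v1 y -> v2 x = v2 y -> v3 x = v3 y -> x = y.
Proof. destruct x, y; simpl; intros; subst; reflexivity. Qed.

Lemma dot_nonneg x : 0 <= dot x x.
Proof. destruct x; unfold dot; simpl; nra. Qed.

Lemma norm_nonneg x : 0 <= norm x.
Proof. apply sqrt_pos. Qed.

Lemma norm_sq x : norm x * norm x = dot x x.
Proof. apply sqrt_sqrt, dot_nonneg. Qed.

Lemma norm_eq x r : 0 <= r -> dot x x = r * r -> norm x = r.
Proof. intros H E; unfold norm; rewrite E; apply sqrt_square; auto. Qed.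

Lemma sq_le a b : 0 <= b -> a * a <= b * b -> a <= b.
Proof. intros; nra. Qed.

Lemma CS x y : dot x y <= norm x * norm y.
Proof.
  pose proof (norm_sq x); pose proof (norm_sq y);
  pose proof (norm_nonneg x); pose proof (norm_nonneg y).
  destruct (Rle_dec (dot x y) 0). nra.
  apply sq_le. nra.
  assert (dot x y * dot x y <= dot x x * dot y y).
  { destruct x as [a b c], y as [d e f]; unfold dot; simpl.
    pose proof (Rle_0_sqr (a*e-b*d)); pose proof (Rle_0_sqr (a*f-c*d)); pose proof (Rle_0_sqr (b*f-c*e)); unfold Rsqr in *; nra. }
  nra.
Qed.

Lemma norm_tri x y : norm (vadd x y) <= norm x + norm y.
Proof.
  pose proof (CS x y). pose proof (norm_sq x); pose proof (norm_sq y);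
  pose proof (norm_nonneg x); pose proof (norm_nonneg y).
  pose proof (norm_sq (vadd x y)); pose proof (norm_nonneg (vadd x y)).
  apply sq_le. lra.
  assert (dot (vadd x y) (vadd x y) = dot x x + 2 * dot x y + dot y y).
  { destruct x, y; unfold dot, vadd; simpl; ring. }
  nra.
Qed.

Lemma dist3_tri x y z : dist3 x z <= dist3 x y + dist3 y z.
Proof.
  unfold dist3. replace (vsub x z) with (vadd (vsub x y) (vsub y z)).
  apply norm_tri. apply V3eq; destruct x, y, z; simpl; ring.
Qed.

Lemma dist3_sym x y : dist3 x y = dist3 y x.
Proof.
  unfold dist3, norm; f_equal; destruct x, y; unfold dot; simpl; ring.
Qed.

Lemma norm_rev a b : Rabs (norm a - norm b) <= norm (vsub a b).
Proof.
  assert (norm a <= norm (vsub a b) + norm b).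
  { replace a with (vadd (vsub a b) b) at 1. apply norm_tri.
    apply V3eq; destruct a, b; simpl; ring. }
  assert (norm b <= norm (vsub a b) + norm a).
  { replace b with (vadd (vsub b a) a) at 1.
    replace (norm (vsub a b)) with (norm (vsub b a)). apply norm_tri.
    apply (dist3_sym b a).
    apply V3eq; destruct a, b; simpl; ring. }
  apply Rabs_le; lra.
Qed.

Lemma coord_le x : Rabs (v1 x) <= norm x /\ Rabs (v2 x) <= norm x /\ Rabs (v3 x) <= norm x.
Proof.
  pose proof (norm_sq x); pose proof (norm_nonneg x).
  destruct x as [a b c]; unfold dot in H; simpl in *.
  repeat split; apply Rabs_le; split; nra.
Qed.

Lemma Rabs_le_inv a b : Rabs a <= b -> -b <= a <= b.
Proof. unfold Rabs; destruct (Rcase_abs a); lra. Qed.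

Lemma list_min {T} (g : T -> R) (l : list T) : l <> nil ->
  exists t0, In t0 l /\ forall t, In t l -> g t0 <= g t.
Proof.
  induction l as [|a l IH]; intros H. congruence.
  destruct l as [|b l'].
  - exists a; split; [left; auto|]. intros t [->|[]]; lra.
  - destruct IH as [t0 [H1 H2]]. discriminate.
    destruct (Rle_dec (g a) (g t0)).
    + exists a; split; [left; auto|]. intros t [->|Ht]. lra. specialize (H2 t Ht); lra.
    + exists t0; split; [right; auto|]. intros t [->|Ht]. lra. auto.
Qed.

Definition toV (t : Compactness.Tn 3 R) : V3 :=
  match t with (a, (b, (c, _))) => mkV3 a b c end.
Definition fromV (x : V3) : Compactness.Tn 3 R := (v1 x, (v2 x, (v3 x, tt))).

Lemma close_dist r y t : 0 < r -> Compactness.close_n 3 (r/2) (fromV y) t -> dist3 y (toV t) < r.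
Proof.
  intros Hr. destruct t as [t1 [t2 [t3 []]]]. destruct y as [y1 y2 y3]. simpl.
  intros [H1 [H2 [H3 _]]].
  apply Rabs_def2 in H1; apply Rabs_def2 in H2; apply Rabs_def2 in H3.
  unfold dist3. pose proof (norm_sq (vsub (mkV3 y1 y2 y3) (mkV3 t1 t2 t3))).
  pose proof (norm_nonneg (vsub (mkV3 y1 y2 y3) (mkV3 t1 t2 t3))).
  unfold dot, vsub in H; simpl in H.
  assert ((y1-t1)*(y1-t1) < r*r/4) by nra.
  assert ((y2-t2)*(y2-t2) < r*r/4) by nra.
  assert ((y3-t3)*(y3-t3) < r*r/4) by nra.
  set (n := norm _) in *. clearbody n. destruct (Rlt_or_le n r); auto; exfalso. assert (r*r <= n*n) by (apply Rmult_le_compat; lra). assert (0 < r*r) by nra. lra.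
Qed.

Lemma min_exists (K : V3 -> Prop) (f : V3 -> R) (M : R) :
 (exists x, K x) -> (forall x, K x -> norm x <= M) ->
 (forall x, (forall eps, 0 < eps -> exists y, K y /\ dist3 y x < eps) -> K x) ->
 (forall x eps, 0 < eps -> exists del, 0 < del /\ forall y, dist3 y x < del -> Rabs (f y - f x) < eps) ->
 exists x, K x /\ forall y, K y -> f x <= f y.
Proof.
 intros Hne Hb Hcl Hcont. apply NNPP; intro Hno.
 assert (Hgood: forall x, exists ry : R * V3, 0 < fst ry /\ K (snd ry) /\
    forall z, K z -> dist3 z x < fst ry -> f (snd ry) < f z).
 { intro x. destruct (classic (K x)) as [Kx|nKx].
   - assert (exists y, K y /\ f y < f x) as [y [Ky Hy]].
     { apply NNPP; intro N; apply Hno; exists x; split; auto; intros y Ky;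
       apply Rnot_lt_le; intro; apply N; eauto. }
     destruct (Hcont x ((f x - f y)/2)) as [del [Hd Hdel]]. lra.
     exists (del, y); simpl; repeat split; auto. intros z Kz Hz.
     specialize (Hdel z Hz). apply Rabs_def2 in Hdel. lra.
   - assert (exists r, 0 < r /\ forall y, K y -> ~ dist3 y x < r) as [r [Hr Hr']].
     { apply NNPP; intro N; apply nKx, Hcl; intros eps He. apply NNPP; intro N2;
       apply N; exists eps; split; auto; intros y Ky Hy; apply N2; eauto. }
     destruct Hne as [y0 Ky0]. exists (r, y0); simpl; repeat split; auto.
     intros z Kz Hz; exfalso; eapply Hr'; eauto. }
 set (G := fun x => proj1_sig (constructive_indefinite_description _ (Hgood x))).
 assert (HG : forall x, 0 < fst (G x) /\ K (snd (G x)) /\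
    forall z, K z -> dist3 z x < fst (G x) -> f (snd (G x)) < f z).
 { intro x; unfold G; destruct (constructive_indefinite_description _ _); auto. }
 assert (Hpos : forall t, 0 < fst (G (toV t)) / 2).
 { intro t; destruct (HG (toV t)) as [H _]; lra. }
 set (delta := fun t => mkposreal _ (Hpos t)).
 pose proof (Compactness.compactness_list 3 (-M,(-M,(-M,tt))) (M,(M,(M,tt))) delta) as Hc.
 apply Hc; intros [l Hl].
 assert (Hcov : forall y, K y -> exists t, In t l /\ f (snd (G (toV t))) < f y).
 { intros y Ky. destruct (Hl (fromV y)) as [t [Hin [_ Hcl']]].
   - pose proof (coord_le y) as [C1 [C2 C3]]. specialize (Hb y Ky).
     apply Rabs_le_inv in C1; apply Rabs_le_inv in C2; apply Rabs_le_inv in C3.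
     destruct y; simpl in *. repeat split; lra.
   - exists t; split; auto. destruct (HG (toV t)) as [Hr [_ H]]. apply H; auto.
     apply close_dist; auto. }
 destruct (list_min (fun t => f (snd (G (toV t)))) l) as [t0 [Hin0 Hmin]].
 { destruct Hne as [y Ky]. destruct (Hcov y Ky) as [t [Ht _]]. intro E; rewrite E in Ht; auto. }
 destruct (HG (toV t0)) as [_ [Ky _]].
 destruct (Hcov _ Ky) as [t [Ht Hlt]]. specialize (Hmin t Ht). simpl in Hmin. lra.
Qed.

Lemma unit_dot w : in_S2 w -> dot w w = 1.
Proof. intro H; rewrite <- norm_sq; rewrite H; ring. Qed.

Lemma norm_scale a w : in_S2 w -> 0 <= a -> norm (vscale a w) = a.
Proof.
  intros H Ha; apply norm_eq; auto. pose proof (unit_dot w H).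
  destruct w as [w1 w2 w3]; unfold dot, vscale in *; simpl in *.
  transitivity (a*a*(w1*w1+w2*w2+w3*w3)); [ring| rewrite H0; ring].
Qed.

Lemma lower x p p' w s : in_S2 w -> 0 <= s ->
  phi x p p' - s <= phi x p (vadd p' (vscale s w)).
Proof.
  intros Hw Hs. unfold phi.
  assert (norm (vsub x p') <= norm (vsub x (vadd p' (vscale s w))) + norm (vscale s w)).
  { replace (vsub x p') with (vadd (vsub x (vadd p' (vscale s w))) (vscale s w)).
    apply norm_tri. apply V3eq; destruct x, p', w; simpl; ring. }
  rewrite norm_scale in H; auto. lra.
Qed.

Lemma den_pos p p' w c : in_S2 w -> norm (vsub p p') <= c -> 0 < sfun w p p' c ->
  0 < c - dot w (vsub p p').
Proof.
  intros Hw Hc HS. pose proof (CS w (vsub p p')). rewrite Hw in H.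
  destruct (Rle_lt_or_eq_dec 0 (c - dot w (vsub p p'))) as [H1|H1]. lra. auto.
  exfalso. unfold sfun in HS. assert (c = norm (vsub p p')) by lra.
  rewrite <- H0 in HS. unfold Rdiv in HS. replace (c^2 - c^2) with 0 in HS by ring. lra.
Qed.

Lemma qfacts p p' w c : in_S2 w -> norm (vsub p p') <= c -> 0 < sfun w p p' c ->
  norm (vsub p (vadd p' (vscale (sfun w p p' c) w))) = c - sfun w p p' c /\
  norm (vsub (vadd p' (vscale (sfun w p p' c) w)) p') = sfun w p p' c.
Proof.
  intros Hw Hc HS. pose proof (den_pos p p' w c Hw Hc HS) as Hd.
  assert (Hkey : sfun w p p' c * (2*(c - dot w (vsub p p'))) = c^2 - norm (vsub p p')^2).
  { unfold sfun; field; intro; lra. }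
  set (S := sfun w p p' c) in *. clearbody S.
  simpl in Hkey. rewrite Rmult_1_r, Rmult_1_r, norm_sq in Hkey.
  pose proof (unit_dot w Hw) as Hww. split.
  2:{ replace (vsub (vadd p' (vscale S w)) p') with (vscale S w). apply norm_scale; [exact Hw|lra].
      apply V3eq; destruct p', w; simpl; ring. }
  destruct p as [p1 p2 p3], p' as [q1 q2 q3], w as [w1 w2 w3].
  unfold dot, vsub, vadd, vscale in *; simpl in *.
  set (e := c - (w1 * (p1 - q1) + w2 * (p2 - q2) + w3 * (p3 - q3))) in *.
  pose proof (pow2_ge_0 (c*w1 - (p1-q1))); pose proof (pow2_ge_0 (c*w2 - (p2-q2)));
  pose proof (pow2_ge_0 (c*w3 - (p3-q3))).
  assert (Hcc : c*c*(w1*w1+w2*w2+w3*w3) = c*c) by (rewrite Hww; ring).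
  assert (HSS : S*S*(w1*w1+w2*w2+w3*w3) = S*S) by (rewrite Hww; ring).
  assert (H2 : (c - S) * (2*e) >= 0).
  { unfold e in *. nra. }
  assert (H3 : c - S >= 0).
  { destruct (Rlt_or_le (c - S) 0); [|lra]. nra. }
  apply norm_eq. lra.
  unfold dot; simpl. unfold e in *. lra.
Qed.

Lemma sq3_zero a b c : a*a + b*b + c*c = 0 -> a = 0 /\ b = 0 /\ c = 0.
Proof. intros; repeat split; nra. Qed.

Lemma Uniq p p' w x c s : in_S2 w -> 0 < s -> norm (vsub p p') <= c -> 0 < sfun w p p' c ->
  phi x p (vadd p' (vscale s w)) <= c - s -> c <= phi x p p' ->
  x = vadd p' (vscale (sfun w p p' c) w).
Proof.
  intros Hw Hs Hc HS H1 H2. pose proof (den_pos p p' w c Hw Hc HS) as Hd.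
  assert (Hkey : sfun w p p' c * (2*(c - dot w (vsub p p'))) = c^2 - norm (vsub p p')^2).
  { unfold sfun; field; intro; lra. }
  set (S := sfun w p p' c) in *. clearbody S.
  simpl in Hkey. rewrite Rmult_1_r, Rmult_1_r, norm_sq in Hkey.
  pose proof (unit_dot w Hw) as Hww.
  pose proof (CS (vsub x p') w) as Hcs. rewrite Hw, Rmult_1_r in Hcs.
  unfold phi in *.
  pose proof (norm_sq (vsub x p')) as SA. pose proof (norm_nonneg (vsub x p')) as NA.
  pose proof (norm_sq (vsub x (vadd p' (vscale s w)))) as SB.
  pose proof (norm_nonneg (vsub x (vadd p' (vscale s w)))) as NB.
  pose proof (norm_sq (vsub p x)) as SP. pose proof (norm_nonneg (vsub p x)) as NP.
  set (A := norm (vsub x p')) in *. set (B := norm (vsub x (vadd p' (vscale s w)))) in *.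
  set (P := norm (vsub p x)) in *. clearbody A B P.
  destruct p as [p1 p2 p3], p' as [q1 q2 q3], w as [w1 w2 w3], x as [x1 x2 x3].
  unfold dot, vsub, vadd, vscale in *; simpl in *.
  assert (Hss : s*s*(w1*w1+w2*w2+w3*w3) = s*s) by (rewrite Hww; ring).
  assert (HAA : A*A*(w1*w1+w2*w2+w3*w3) = A*A) by (rewrite Hww; ring).
  set (aw := (x1 - q1) * w1 + (x2 - q2) * w2 + (x3 - q3) * w3) in *.
  assert (HB2 : B*B = A*A - 2*s*aw + s*s) by (unfold aw; lra).
  assert (HBA : B <= A - s) by lra.
  assert (HAB2 : B*B <= (A-s)*(A-s)) by (apply Rmult_le_compat; lra).
  assert (Haw : aw = A).
  { destruct (Rlt_or_le aw A); [|lra]. exfalso.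
    assert (s*(A - aw) > 0) by (apply Rmult_gt_0_compat; lra). lra. }
  assert (Hz : (x1-q1-A*w1)*(x1-q1-A*w1) + (x2-q2-A*w2)*(x2-q2-A*w2) + (x3-q3-A*w3)*(x3-q3-A*w3) = 0).
  { assert (HAaw : A*aw = A*A) by (rewrite Haw; ring). unfold aw in *. lra. }
  apply sq3_zero in Hz. destruct Hz as [E1 [E2 E3]].
  assert (Ex1 : x1 = q1 + A*w1) by lra. assert (Ex2 : x2 = q2 + A*w2) by lra.
  assert (Ex3 : x3 = q3 + A*w3) by lra. clear E1 E2 E3 Hcs Haw HB2 HAB2. clear aw.
  subst x1 x2 x3.
  assert (HB2 : B*B = (A-s)*(A-s)) by (assert (A*s*(w1*w1+w2*w2+w3*w3) = A*s) by (rewrite Hww; ring); lra).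
  assert (HBe : B = A - s) by nra.
  assert (HP : P = c - A) by lra.
  rewrite HP in SP.
  assert (HAS : (A - S) * (2 * (c - (w1 * (p1 - q1) + w2 * (p2 - q2) + w3 * (p3 - q3)))) = 0) by lra.
  apply Rmult_integral in HAS. destruct HAS as [HAS|HAS]; [|lra].
  assert (A = S) by lra. subst A.
  apply V3eq; simpl; ring.
Qed.

Lemma phi_q p p' w c s : in_S2 w -> norm (vsub p p') <= c -> 0 < sfun w p p' c ->
  0 <= s <= sfun w p p' c ->
  phi (vadd p' (vscale (sfun w p p' c) w)) p p' = c /\
  phi (vadd p' (vscale (sfun w p p' c) w)) p (vadd p' (vscale s w)) = c - s.
Proof.
  intros Hw Hc HS Hs. destruct (qfacts p p' w c Hw Hc HS) as [Q1 Q2].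
  set (S := sfun w p p' c) in *. unfold phi. rewrite Q1, Q2. split. ring.
  replace (vsub (vadd p' (vscale S w)) (vadd p' (vscale s w))) with (vscale (S - s) w).
  rewrite norm_scale; auto; lra.
  apply V3eq; destruct p', w; simpl; ring.
Qed.

Lemma unit_of a : 0 < norm a -> in_S2 (vscale (/ norm a) a).
Proof.
  intro H. apply norm_eq. lra. pose proof (norm_sq a).
  transitivity (/ norm a * / norm a * dot a a).
  destruct a; unfold dot; simpl; ring. rewrite <- H0. field. lra.
Qed.

Theorem proposition5p1
  (D : V3 -> Prop) (p p' : V3) (c eta' s : R)
  (HDne : exists x, D x) (HDopen : is_open D) (HDbdd : is_bounded D)
  (HDC2 : C2_boundary D)
  (Hp : ~ closure D p) (Hp' : ~ closure D p')
  (Hseg : forall t, 0 <= t <= 1 -> ~ closure D (vadd p (vscale t (vsub p' p))))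
  (HB' : forall x, dist3 x p' <= eta' -> ~ closure D x)
  (Hc : is_min_on (boundary D) (fun x => phi x p p') c)
  (Heta'pos : 0 < eta')
  (Heta'inf : exists m, is_inf_on in_S2 (fun w => sfun w p p' c) m /\ eta' < m)
  (Hs : 0 < s < eta') :
  (forall w, in_S2 w ->
     boundary D (vadd p' (vscale (sfun w p p' c) w)) ->
     is_min_on (boundary D) (fun x => phi x p (vadd p' (vscale s w))) (c - s)) /\
  (forall w, in_S2 w ->
     ~ boundary D (vadd p' (vscale (sfun w p p' c) w)) ->
     exists m, is_min_on (boundary D) (fun x => phi x p (vadd p' (vscale s w))) m
               /\ c - s < m) /\
  (forall q, Lambda D p p' c q <->
     exists w, in_S2 w /\ q = vadd p' (vscale (sfun w p p' c) w) /\
       is_min_on (boundary D) (fun x => phi x p (vadd p' (vscale s w))) (c - s)).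
Proof.
  destruct Hc as [[q0 [Bq0 Eq0]] Hcmin].
  assert (Hd : norm (vsub p p') <= c).
  { rewrite <- Eq0. unfold phi. replace (vsub p p') with (vadd (vsub p q0) (vsub q0 p')).
    apply norm_tri. apply V3eq; destruct p, q0, p'; simpl; ring. }
  assert (HSp : forall w, in_S2 w -> eta' < sfun w p p' c).
  { intros w Hw. destruct Heta'inf as [m [[Hinf _] Hm]]. specialize (Hinf w Hw). simpl in Hinf. lra. }
  assert (Part1 : forall w, in_S2 w ->
     boundary D (vadd p' (vscale (sfun w p p' c) w)) ->
     is_min_on (boundary D) (fun x => phi x p (vadd p' (vscale s w))) (c - s)).
  { intros w Hw Hb. pose proof (HSp w Hw).
    destruct (phi_q p p' w c s Hw Hd) as [_ E]; try lra.
    split. exists (vadd p' (vscale (sfun w p p' c) w)); split; auto.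
    intros x Bx. pose proof (lower x p p' w s Hw). pose proof (Hcmin x Bx). simpl in *. lra. }
  split; [exact Part1|split].
  - intros w Hw Hnb. pose proof (HSp w Hw).
    destruct HDbdd as [M HM].
    destruct (min_exists (boundary D) (fun x => phi x p (vadd p' (vscale s w))) (M + 1))
      as [x0 [Bx0 Hx0]].
    + exists q0; auto.
    + intros x [Cx _]. destruct (Cx 1) as [y [Dy Hy]]. lra.
      specialize (HM y Dy). pose proof (norm_tri (vsub x y) y).
      replace (vadd (vsub x y) y) with x in H0 by (apply V3eq; destruct x, y; simpl; ring).
      rewrite dist3_sym in Hy. unfold dist3 in Hy. lra.
    + intros x Hx. split.
      * intros eps He. destruct (Hx (eps/2)) as [y [[Cy _] Hy]]. lra.
        destruct (Cy (eps/2)) as [z [Dz Hz]]. lra.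
        exists z; split; auto. pose proof (dist3_tri z y x). lra.
      * intros [r [Hr Hint]]. destruct (Hx (r/2)) as [y [[_ Ny] Hy]]. lra.
        apply Ny. exists (r/2); split. lra. intros z Hz. apply Hint.
        pose proof (dist3_tri z y x). lra.
    + intros x eps He. exists (eps/2); split. lra. intros y Hy.
      unfold phi. set (r := vadd p' (vscale s w)).
      pose proof (norm_rev (vsub p y) (vsub p x)).
      pose proof (norm_rev (vsub y r) (vsub x r)).
      replace (vsub (vsub p y) (vsub p x)) with (vsub x y) in H0
        by (apply V3eq; destruct p, x, y; simpl; ring).
      replace (vsub (vsub y r) (vsub x r)) with (vsub y x) in H1
        by (apply V3eq; destruct r, x, y; simpl; ring).
      fold (dist3 x y) in H0. fold (dist3 y x) in H1. rewrite dist3_sym in H0.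
      pose proof (Rabs_triang (norm (vsub p y) - norm (vsub p x)) (norm (vsub y r) - norm (vsub x r))).
      replace (norm (vsub p y) - norm (vsub p x) + (norm (vsub y r) - norm (vsub x r))) with
        (norm (vsub p y) + norm (vsub y r) - (norm (vsub p x) + norm (vsub x r))) in H2 by ring.
      lra.
    + exists (phi x0 p (vadd p' (vscale s w))). split.
      * split. exists x0; split; auto. exact Hx0.
      * pose proof (lower x0 p p' w s Hw). pose proof (Hcmin x0 Bx0). simpl in *.
        destruct (Rlt_or_le (c - s) (phi x0 p (vadd p' (vscale s w)))) as [Hlt|Hle]; auto.
        exfalso. apply Hnb.
        rewrite <- (Uniq p p' w x0 c s Hw ltac:(lra) Hd ltac:(lra) Hle ltac:(assumption)). exact Bx0.
  - intros q. split.
    + intros [Bq Eq].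
      set (t := dist3 q p').
      assert (Ht : eta' < t).
      { destruct (Rlt_or_le eta' t); auto. exfalso. apply (HB' q H). apply Bq. }
      set (w := vscale (/t) (vsub q p')).
      assert (Hw : in_S2 w).
      { apply unit_of. fold (dist3 q p'). fold t. lra. }
      assert (Hq : q = vadd p' (vscale t w)).
      { unfold w. apply V3eq; destruct q, p'; simpl; field; lra. }
      assert (Hphi : phi q p (vadd p' (vscale s w)) <= c - s).
      { unfold phi. replace (vsub q (vadd p' (vscale s w))) with (vscale (t - s) w).
        rewrite norm_scale; auto; try lra. unfold phi in Eq. fold (dist3 q p') in Eq. fold t in Eq. lra.
        rewrite Hq at 1. apply V3eq; destruct p', w; simpl; ring. }
      pose proof (HSp w Hw).
      assert (HqS := Uniq p p' w q c s Hw ltac:(lra) Hd ltac:(lra) Hphi ltac:(lra)).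
      exists w; split; auto; split; auto. apply Part1; auto. rewrite <- HqS; auto.
    + intros [w [Hw [Hq [[x [Bx Ex]] _]]]].
      pose proof (HSp w Hw). pose proof (Hcmin x Bx). simpl in *.
      assert (Hx := Uniq p p' w x c s Hw ltac:(lra) Hd ltac:(lra) ltac:(lra) H0).
      subst q. split. rewrite <- Hx; auto.
      destruct (phi_q p p' w c s Hw Hd) as [E _]; try lra.
Qed.
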